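(* Let $r_n$ ($n\ge 0$) denote the parity of the number of runs of $1$'s in the binary representation of $n$, and for $k\ge 0$ let $R_k$ denote the finite word $r_0r_1\cdots r_{2^k-1}$ consisting of the first $2^k$ terms. Then $R_1=01$, and for every $k\ge 1$ we have the concatenation $R_{k+1}=R_kS_k$, where $S_k$ is the word obtained from $R_k$ by replacing each of its first $2^{k-1}$ letters $x$ by $1-x$ and leaving the remaining $2^{k-1}$ letters unchanged.
   Context: A run of $1$'s in the binary representation of $n$ is a maximal block of consecutive binary digits equal to $1$; parity means the number modulo $2$, so $r_n\in\{0,1\}$. *)

(* Defs.v *)
From mathcomp Require Import all_boot.
Set Implicit Arguments. Unset Strict Implicit. Unset Printing Implicit Defensive.

(* binary digits of n, least significant first; bin 0 = [::] *)
Fixpoint bin_aux (fuel n : nat) : seq bool :=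
  match fuel with
  | 0 => [::]
  | f.+1 => if n == 0 then [::] else odd n :: bin_aux f n./2
  end.
Definition bin (n : nat) : seq bool := bin_aux n n.

(* number of maximal blocks of consecutive trues in a word:
   count positions holding true that are followed by false or by the end *)
Fixpoint runs1 (s : seq bool) : nat :=
  match s with
  | [::] => 0
  | b :: t => (b && ~~ head false t) + runs1 t
  end.

Definition r (n : nat) : nat := odd (runs1 (bin n)).

Definition Rword (k : nat) : seq nat := mkseq r (2 ^ k).

Definition Sword (k : nat) : seq nat :=
  [seq 1 - x | x <- take (2 ^ k.-1) (Rword k)] ++ drop (2 ^ k.-1) (Rword k).

(* Main.v *)
Require Import Defs.
From mathcomp Require Import all_boot zify.

Lemma half_lt n : 0 < n -> n./2 < n.
Proof. by move=> H; rewrite -divn2; apply: ltn_Pdiv. Qed.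

Lemma bin_auxE f g n : n <= f -> n <= g -> bin_aux f n = bin_aux g n.
Proof.
elim: f g n => [|f IH] [|g] n /=.
- by [].
- by rewrite leqn0 => /eqP -> _.
- by move=> _; rewrite leqn0 => /eqP ->.
- move=> Hf Hg; case: eqP => // /eqP n0; congr (_ :: _).
  have h := half_lt n; rewrite lt0n n0 in h; have {}h := h isT.
  apply: IH; lia.
Qed.

Lemma binE n : bin n = if n == 0 then [::] else odd n :: bin n./2.
Proof.
case: n => [|n] //=; rewrite /bin /=; congr (_ :: _).
by apply: bin_auxE => //; have := half_lt n.+1 isT.
Qed.

Definition runs n := runs1 (bin n).

Lemma runsE n : runs n = (odd n && ~~ odd n./2) + runs n./2.
Proof.
rewrite /runs {1}binE; case: eqP => [->|_] //=.
congr (_ + _); rewrite binE; case: eqP => [->|] //=.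
Qed.

Lemma halfP m : exists2 b, b <= 1 & m = b + 2 * m./2.
Proof. exists (odd m : nat); first by case: (odd m). by rewrite mul2n odd_double_half. Qed.

Lemma key k m : m < 2 ^ k.+1 -> runs (2 ^ k.+1 + m) = runs m + (m < 2 ^ k).
Proof.
elim: k m => [|k IH] m.
  by case: m => [|[|m]] //.
move=> Hm.
rewrite runsE (runsE m).
have -> : (2 ^ k.+2 + m)./2 = 2 ^ k.+1 + m./2.
  by rewrite expnS mul2n halfD odd_double doubleK /= add0n.
have [b hb hm] := halfP m.
have e2 : 2 ^ k.+2 = 2 * 2 ^ k.+1 by rewrite expnS.
have e1 : 2 ^ k.+1 = 2 * 2 ^ k by rewrite expnS.
rewrite IH; last by lia.
rewrite oddD expnS mul2n odd_double /=.
have -> : (m./2 < 2 ^ k) = (m < 2 ^ k.+1) by apply/idP/idP; lia.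
lia.
Qed.

Theorem theorem2 :
  Rword 1 = [:: 0; 1] /\
  (forall k : nat, 1 <= k -> Rword k.+1 = Rword k ++ Sword k).
Proof.
split; first by [].
case=> [|j] // _.
have hsz : 2 ^ j <= 2 ^ j.+1 by rewrite leq_exp2l.
have e1 : 2 ^ j.+1 = 2 ^ j + 2 ^ j by rewrite expnS mul2n addnn.
have hp : 0 < 2 ^ j by rewrite expn_gt0.
have e2 : 2 ^ j.+2 = 2 ^ j.+1 + 2 ^ j.+1 by rewrite expnS mul2n addnn.
rewrite /Sword /Rword /= e2.
apply: (@eq_from_nth _ 0).
  rewrite !size_cat size_map size_take size_drop !size_mkseq.
  case: ltnP; lia.
move=> i; rewrite size_mkseq => Hi.
rewrite nth_mkseq // nth_cat size_mkseq.
case: ltnP => Hi1; first by rewrite nth_mkseq.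
rewrite nth_cat size_map size_take size_mkseq.
have -> : (if 2 ^ j < 2 ^ j.+1 then 2 ^ j else 2 ^ j.+1) = 2 ^ j by case: ltnP => //; lia.
have {1}-> : i = 2 ^ j.+1 + (i - 2 ^ j.+1) by lia.
rewrite /r -/(runs _) key; last by lia.
case: ltnP => Hi2.
  rewrite (nth_map 0); last first. rewrite size_take size_mkseq; have -> : 2^j < 2^j.+1 by rewrite ltn_exp2l. by [].
  rewrite nth_take // nth_mkseq; last by lia.
  rewrite /runs addn1 oddS; by case: (odd _).
rewrite nth_drop nth_mkseq; last by lia.
rewrite /runs addn0 subnKC //.
Qed.
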